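(* Let $\mathsf{R}$ be a commutative ring and let $f = \sum_{k=1}^t a_k \mathbf{x}^{\mathbf{e}_k} \in \mathsf{R}[x_1,\ldots,x_n]$ with nonzero $a_k$, pairwise distinct exponent vectors $\mathbf{e}_k\in\mathbb{Z}_{\ge 0}^n$, max degree less than $D$, and $t\le T$. Let $0<\mu<1$ and let $1\le i\le t$ be the index of a term of $f$. Let $\lambda$ be the least prime number with $\lambda \ge T/\mu$. If integers $s_1,\ldots,s_n$ are chosen independently and uniformly at random from $\{0,1,\ldots,\lambda-1\}$, then the probability that the $i$th term of $f$ collides in $f(z^{s_1},\ldots,z^{s_n})$ is less than $\mu$.
   Context: Here $\mathbf{x}^{\mathbf{e}} = x_1^{e_1}\cdots x_n^{e_n}$. ''Max degree less than $D$'' means every variable occurs in $f$ with exponent less than $D$. For $\mathbf{s}=(s_1,\ldots,s_n)$, the $i$th term of $f$ collides in the substitution $f(z^{s_1},\ldots,z^{s_n})$ if there exists $j\neq i$ with $\mathbf{e}_i\cdot\mathbf{s} = \mathbf{e}_j\cdot\mathbf{s}$. *)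

(* Defs.v *)
From mathcomp Require Import all_boot all_order all_algebra.
From mathcomp Require Import multinomials.mpoly.
Set Implicit Arguments. Unset Strict Implicit. Unset Printing Implicit Defensive.
Import Order.TTheory GRing.Theory Num.Theory.

(* The exponent of the substitution z |-> (z^{s_1},...,z^{s_n}) applied to x^m,
   i.e. the dot product m . s. *)
Definition subst_exp (n : nat) (m : 'X_{1..n}) (s : 'I_n -> nat) : nat :=
  (\sum_(k < n) m k * s k)%N.

Definition collides (R : comRingType) (n : nat) (f : {mpoly R[n]})
    (m : 'X_{1..n}) (s : 'I_n -> nat) : bool :=
  has (fun m' => (m' != m) && (subst_exp m' s == subst_exp m s)) (msupp f).

Definition least_prime_ge {F : realFieldType} (T : nat) (mu : F) (lam : nat) : Prop :=
  [/\ prime lam, (T%:R / mu <= lam%:R)%R &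
      forall p : nat, prime p -> (T%:R / mu <= p%:R)%R -> (lam <= p)%N].

(* Main.v *)
Require Import Defs.
From mathcomp Require Import all_boot all_order all_algebra.
From mathcomp Require Import multinomials.mpoly.
From mathcomp Require Import zify ring lra.
Import Order.TTheory GRing.Theory Num.Theory.

Definition Aset (n lam : nat) (m m' : 'X_{1..n}) : {set {ffun 'I_n -> 'I_lam}} :=
  [set s : {ffun 'I_n -> 'I_lam} |
     subst_exp m' (fun k => nat_of_ord (s k)) == subst_exp m (fun k => nat_of_ord (s k))].

Lemma key (n lam : nat) (m m' : 'X_{1..n}) : m' != m ->
  (#|Aset n lam m m'| * lam <= lam ^ n)%N.
Proof.
move=> neq.
have [k0 hk0] : exists k0, m' k0 != m k0.
  case: (pickP (fun k => m' k != m k)) => [k0 hk0|h]; first by exists k0.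
  move/eqP: neq; case; apply/mnmP => k; move: (h k) => /negbFE/eqP //.
pose g := fun p : {ffun 'I_n -> 'I_lam} * 'I_lam =>
  [ffun j => if j == k0 then p.2 else p.1 j].
have inj : {in setX (Aset n lam m m') setT &, injective g}.
  move=> [s d] [s' d'] /setXP[hs _] /setXP[hs' _] /= E.
  have Ed : d = d' by move/ffunP: E => /(_ k0); rewrite !ffunE eqxx.
  have Eo : forall j, j != k0 -> s j = s' j.
    by move=> j hj; move/ffunP: E => /(_ j); rewrite !ffunE (negbTE hj).
  suff Ek : s k0 = s' k0.
    congr pair => //; apply/ffunP => j; case: (eqVneq j k0) => [->|/Eo] //.
  move: hs hs'; rewrite !inE /subst_exp => /eqP hs /eqP hs'.
  rewrite (bigD1 k0) //= [RHS](bigD1 k0) //= in hs.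
  rewrite (bigD1 k0) //= [RHS](bigD1 k0) //= in hs'.
  rewrite [X in _ + X = _](eq_bigr (fun k => m' k * s k)%N) in hs';
    last by move=> j hj; rewrite Eo.
  rewrite [X in _ = _ + X](eq_bigr (fun k => m k * s k)%N) in hs';
    last by move=> j hj; rewrite Eo.
  move: hs hs'.
  set P := (\sum_(i | _) _)%N; set Q := (\sum_(i | _) _)%N.
  move=> hs hs'; apply: val_inj => /=; move: hs hs'.
  clearbody P Q.
  move: hk0 (ltn_ord (s k0)) (ltn_ord (s' k0)).
  move: (m' k0) (m k0) (nat_of_ord (s k0)) (nat_of_ord (s' k0)) => a b x y.
  move=> hab _ _ h1 h2.
  move/eqP: hab => hab.
  case: (ltngtP a b) => hlt; [|nia|by []].
  nia.
have := card_in_imset inj; rewrite cardsX cardsT card_ord => <-.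
have -> : (lam ^ n = #|{ffun 'I_n -> 'I_lam}|)%N by rewrite card_ffun !card_ord.
exact: max_card.
Qed.

Lemma card_has (T : finType) (U : Type) (p : T -> U -> bool) (l : seq U) :
  (#|[set s | has (p s) l]| <= \sum_(x <- l) #|[set s | p s x]|)%N.
Proof.
elim: l => [|x l IH]; first by rewrite big_nil leqn0 cards_eq0; apply/eqP/setP => s; rewrite !inE.
rewrite big_cons.
have -> : [set s | has (p s) (x :: l)] = [set s | p s x] :|: [set s | has (p s) l].
  by apply/setP => s; rewrite !inE.
apply: leq_trans (leq_card_setU _ _) _; exact: leq_add.
Qed.

Lemma count_bound (R : comRingType) (n lam : nat) (f : {mpoly R[n]}) (m : 'X_{1..n}) :
  m \in msupp f ->
  (#|[set s : {ffun 'I_n -> 'I_lam} | collides f m (fun k => nat_of_ord (s k))]| * lam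
     <= (size (msupp f)).-1 * lam ^ n)%N.
Proof.
move=> mf.
have H := @card_has _ _ (fun (s : {ffun 'I_n -> 'I_lam}) m' => (m' != m) &&
  (subst_exp m' (fun k => nat_of_ord (s k)) == subst_exp m (fun k => nat_of_ord (s k)))) (msupp f).
apply: leq_trans (leq_mul H (leqnn lam)) _.
rewrite big_distrl /=.
apply: leq_trans (_ : \sum_(x <- msupp f | x != m) lam ^ n <= _)%N.
  rewrite [X in (_ <= X)%N]big_mkcond /=; apply: leq_sum => x _.
  case: (eqVneq x m) => [->|hx] /=.
    rewrite leqn0 muln_eq0; apply/orP; left; rewrite cards_eq0.
    by apply/eqP/setP => s; rewrite !inE.
  exact: key.
rewrite big_const_seq iter_addn_0 mulnC leq_mul2r; apply/orP; right.
have := count_predC (pred1 m) (msupp f).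
rewrite count_uniq_mem ?msupp_uniq // mf.
have -> : count (predC (pred1 m)) (msupp f) = count (fun x => x != m) (msupp f) by [].
move=> <-; by rewrite add1n.
Qed.

Theorem lemma3p3 (R : comRingType) (F : realFieldType) (n D T lam : nat)
    (f : {mpoly R[n]}) (mu : F) (m : 'X_{1..n}) :
  (forall e : 'X_{1..n}, e \in msupp f -> forall k : 'I_n, (e k < D)%N) ->
  (size (msupp f) <= T)%N ->
  (0 < mu)%R -> (mu < 1)%R ->
  m \in msupp f ->
  least_prime_ge T mu lam ->
  (#|[set s : {ffun 'I_n -> 'I_lam} | collides f m (fun k => nat_of_ord (s k))]|%:R
     / (lam ^ n)%:R < mu)%R.
Proof.
move=> _ hT mu0 _ mf [plam hlam _].
have lam0 : (0 < lam)%N by exact: prime_gt0.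
have T1 : (0 < size (msupp f))%N by case: (msupp f) mf.
have hc := @count_bound _ _ lam _ _ mf.
set c := #|_| in hc *.
have ln0 : (0 < lam ^ n)%N by rewrite expn_gt0 lam0.
rewrite ltr_pdivrMr ?ltr0n //.
have hT' : (T%:R <= lam%:R * mu :> F)%R by rewrite -ler_pdivrMr.
have hc' : ((c * lam)%:R <= ((T.-1) * lam ^ n)%:R :> F)%R.
  rewrite ler_nat; apply: leq_trans hc _; rewrite leq_mul2r; apply/orP; right.
  by rewrite -!subn1 leq_sub2r.
rewrite !natrM in hc'.
have lamR : (0 < lam%:R :> F)%R by rewrite ltr0n.
have LR : (0 < (lam ^ n)%:R :> F)%R by rewrite ltr0n.
have TR : (T.-1%:R + 1 = T%:R :> F)%R.
  by rewrite natr1 prednK // (leq_trans T1 hT).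
rewrite -(ltr_pM2r lamR).
apply: le_lt_trans hc' _.
rewrite -TR in hT'.
set L := ((lam ^ n)%:R : F)%R in LR *.
set a := ((T.-1)%:R : F)%R in hT' *.
set l := (lam%:R : F)%R in lamR hT' *.
set cc := (c%:R : F)%R.
nra.
Qed.
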